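(* Let $\xi=(\tau_L,\delta_L,\tau_R,\delta_R)\in\Phi$. If $J_1(\xi)>1$ then $\phi(g(\xi))<0$.
   Context: Let $\Phi=\{\xi\in\mathbb{R}^4: \tau_L>\delta_L+1,\ \delta_L>0,\ \tau_R<-(\delta_R+1),\ \delta_R>0\}$. For $\xi\in\Phi$, the matrix $\begin{bmatrix}\tau_L&1\\-\delta_L&0\end{bmatrix}$ has real eigenvalues $0<\lambda_L^s<1<\lambda_L^u$ and $\begin{bmatrix}\tau_R&1\\-\delta_R&0\end{bmatrix}$ has real eigenvalues $\lambda_R^u<-1<\lambda_R^s<0$. Define $\phi(\xi)=\delta_R-\left(\tau_R+\delta_L+\delta_R-(1+\tau_R)\lambda_L^u\right)\lambda_L^u$ (with $\lambda_L^u$ computed from the first and second components of $\xi$), $J_1(\xi)=\frac{\lambda_L^u(\lambda_R^u)^2}{\lambda_L^u+|\lambda_R^u|}$, and $g:\Phi\to\Phi$, $g(\xi)=\left(\tau_R^2-2\delta_R,\ \delta_R^2,\ \tau_L\tau_R-\delta_L-\delta_R,\ \delta_L\delta_R\right)$. *)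

(* Defs.v *)
From Stdlib Require Import Reals.
Open Scope R_scope.

Definition Xi : Type := (R * R * R * R)%type.

Definition inPhi (x : Xi) : Prop :=
  let '(tL, dL, tR, dR) := x in
  tL > dL + 1 /\ dL > 0 /\ tR < - (dR + 1) /\ dR > 0.

(* Eigenvalues of [[t, 1], [-d, 0]] are the roots of z^2 - t z + d,
   i.e. (t +/- sqrt(t^2 - 4 d)) / 2.
   lamLu: the larger root (lambda_L^u > 1 when t > d + 1, d > 0).
   lamRu: the smaller root (lambda_R^u < -1 when t < -(d + 1), d > 0). *)
Definition lamLu (t d : R) : R := (t + sqrt (t * t - 4 * d)) / 2.
Definition lamRu (t d : R) : R := (t - sqrt (t * t - 4 * d)) / 2.

Definition phi (x : Xi) : R :=
  let '(tL, dL, tR, dR) := x in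
  dR - (tR + dL + dR - (1 + tR) * lamLu tL dL) * lamLu tL dL.

Definition J1 (x : Xi) : R :=
  let '(tL, dL, tR, dR) := x in
  lamLu tL dL * (lamRu tR dR) ^ 2 / (lamLu tL dL + Rabs (lamRu tR dR)).

Definition g (x : Xi) : Xi :=
  let '(tL, dL, tR, dR) := x in
  (tR ^ 2 - 2 * dR, dR ^ 2, tL * tR - dL - dR, dL * dR).

(* Main.v *)
Require Import Defs.
From Stdlib Require Import Reals Lra Psatz.
Open Scope R_scope.

Lemma core (p q a b : R) : p > 1 -> 0 < q -> q < 1 -> a < -1 -> -1 < b -> b < 0 ->
  p * a ^ 2 > p - a ->
  (p*q)*(a*b) - ((p+q)*(a+b) - p*q - a*b + (p*q)*(a*b)
     - (1 + (p+q)*(a+b) - p*q - a*b) * (a^2)) * (a^2) < 0.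
Proof.
  intros Hp Hq0 Hq1 Ha Hb0 Hb1 HJ.
  set (f00 := a^3 * (p*a^2 - p + a)).
  set (X01 := (1+a) + p*(a-1)).
  set (f01 := a^2 * (X01*(a^2-1)+1)).
  set (X10 := 1 - p + (p+1)*a).
  set (f10 := a^2 * (X10*(a^2-1)+1)).
  set (X11 := p*(a-2) + 2*a).
  set (f11 := p*a*(a^2-1) + a^2*(X11*(a^2-1)+1)).
  set (s := -b).
  assert (Hid : (p*q)*(a*b) - ((p+q)*(a+b) - p*q - a*b + (p*q)*(a*b)
     - (1 + (p+q)*(a+b) - p*q - a*b) * (a^2)) * (a^2)
     = (1-q)*(1-s)*f00 + (1-q)*s*f01 + q*(1-s)*f10 + q*s*f11).
  { unfold f00, f01, f10, f11, X01, X10, X11, s; ring. }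
  rewrite Hid.
  assert (Ha2 : a^2 - 1 > 0) by nra.
  assert (HK : p*(a^2-1) > -a) by nra.
  assert (H00 : f00 < 0).
  { unfold f00. assert (a^3 < 0) by nra. nra. }
  assert (H01 : f01 < 0).
  { unfold f01, X01.
    assert ((1+a)*(a^2-1) < 0) by nra.
    assert ((a-1)*(p*(a^2-1)) < (a-1)*(-a)) by nra.
    assert (a^2 > 0) by nra. nra. }
  assert (H10 : f10 < 0).
  { unfold f10, X10.
    assert (X : (1 - p + (p+1)*a) < -2*p) by nra.
    assert ((1 - p + (p+1)*a)*(a^2-1) < -2*p*(a^2-1)) by nra.
    assert (a^2 > 0) by nra. nra. }
  assert (H11 : f11 < 0).
  { unfold f11, X11.
    assert (p*a*(a^2-1) < 0) by nra.
    assert ((p*(a-2) + 2*a)*(a^2-1) < -3*p*(a^2-1)) by nra.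
    assert (a^2 > 0) by nra. nra. }
  assert (0 < s < 1) by (unfold s; lra).
  assert ((1-q)*(1-s) > 0) by nra.
  assert ((1-q)*s > 0) by nra.
  assert (q*(1-s) > 0) by nra.
  assert (q*s > 0) by nra.
  nra.
Qed.

Lemma setupL (tL dL : R) : tL > dL + 1 -> dL > 0 ->
  exists p q, tL = p + q /\ dL = p * q /\ lamLu tL dL = p /\ p > 1 /\ 0 < q /\ q < 1.
Proof.
  intros H1 H2. unfold lamLu.
  set (D := tL*tL - 4*dL).
  assert (HD : 0 <= D).
  { unfold D. assert (0 < (tL - (dL+1))*(tL + (dL+1))) by (apply Rmult_lt_0_compat; lra). pose proof (pow2_ge_0 (dL-1)). nra. }
  set (s := sqrt D).
  assert (Hs0 : 0 <= s) by apply sqrt_pos.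
  assert (Hs2 : s*s = D) by (apply sqrt_sqrt; exact HD).
  exists ((tL + s)/2), ((tL - s)/2).
  assert (Hp : (tL+s)/2 > 1).
  { unfold D in Hs2. destruct (Rlt_dec 2 tL). lra.
    destruct (Rle_dec s (2 - tL)). 2: lra.
    assert (s*s <= (2-tL)*(2-tL)) by (apply Rmult_le_compat; lra). nra. }
  repeat split; try field; try lra.
  - unfold D in Hs2. nra.
  - unfold D in Hs2. assert (s < tL) by nra. lra.
  - unfold D in Hs2. nra.
Qed.

Lemma setupR (tR dR : R) : tR < - (dR + 1) -> dR > 0 ->
  exists a b, tR = a + b /\ dR = a * b /\ a < -1 /\ -1 < b /\ b < 0 /\ lamRu tR dR = a.
Proof.
  intros H1 H2. unfold lamRu.
  set (D := tR*tR - 4*dR).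
  assert (HD : 0 <= D).
  { unfold D. assert (0 < (-(dR+1) - tR)*(-tR + (dR+1))) by (apply Rmult_lt_0_compat; lra). pose proof (pow2_ge_0 (dR-1)). nra. }
  set (s := sqrt D).
  assert (Hs0 : 0 <= s) by apply sqrt_pos.
  assert (Hs2 : s*s = D) by (apply sqrt_sqrt; exact HD).
  exists ((tR - s)/2), ((tR + s)/2).
  assert (Ha : (tR-s)/2 < -1).
  { unfold D in Hs2. destruct (Rle_dec (tR+2) 0). nra. nra. }
  assert (Hb : (tR+s)/2 < 0).
  { unfold D in Hs2. assert (s < -tR) by nra. lra. }
  repeat split; try field; try lra.
  - unfold D in Hs2. nra.
  - unfold D in Hs2. nra.
Qed.

Theorem lemma5p2 (tL dL tR dR : R) :
  inPhi (tL, dL, tR, dR) ->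
  J1 (tL, dL, tR, dR) > 1 ->
  phi (g (tL, dL, tR, dR)) < 0.
Proof.
  unfold inPhi, J1, phi, g. intros [H1 [H2 [H3 H4]]] HJ.
  destruct (setupL tL dL H1 H2) as [p [q [Et [Ed [El [Hp [Hq0 Hq1]]]]]]].
  destruct (setupR tR dR H3 H4) as [a [b [Et' [Ed' [Ha [Hb0 [Hb1 Er]]]]]]].
  rewrite El, Er in HJ.
  rewrite Rabs_left in HJ by lra.
  assert (HJ' : p * a ^ 2 > p - a).
  { assert (Hpos : p + - a > 0) by lra.
    assert (E : p * a ^ 2 / (p + - a) * (p + - a) = p * a ^ 2) by (field; lra).
    nra. }
  assert (Hg : lamLu (tR ^ 2 - 2 * dR) (dR ^ 2) = a ^ 2).
  { unfold lamLu.
    replace ((tR ^ 2 - 2 * dR) * (tR ^ 2 - 2 * dR) - 4 * dR ^ 2)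
      with ((a^2 - b^2) * (a^2 - b^2)) by (subst; ring).
    rewrite sqrt_square by nra. subst. field. }
  rewrite Hg. subst tL dL tR dR.
  pose proof (core p q a b Hp Hq0 Hq1 Ha Hb0 Hb1 HJ').
  replace ((a + b) ^ 2 - 2 * (a * b)) with (a^2+b^2) in * by ring.
  replace ((p * q) * (a * b)) with (p * q * (a * b)) in * by ring.
  nra.
Qed.
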